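(* Let $\tau_m=2^m$, let epoch $m$ consist of the rounds $t$ with $\tau_{m-1}<t\le\tau_m$, and write $m(t)$ for the epoch containing $t$. Fix $m_0\ge 1$, $T>\tau_{m_0-1}$ and $\delta\in(0,1)$. Consider a process in which at each round $t$ a context $x_t\sim\mathcal D_{\mathcal X}$ is drawn independently of the past, a reward vector $y_t\in[0,1]^K$ satisfies $\mathbb E[y_t(a)\mid x_t,\mathfrak S_{t-1}]=\mu(x_t,a)$ for all $a$, an action $a_t$ is chosen (arbitrarily for $t\le\tau_{m_0-1}$), and for $t>\tau_{m_0-1}$, $a_t\sim p_{m(t)}(\cdot\mid x_t)$ independently of $y_t$ given $(x_t,\mathfrak S_{t-1})$, where $(\widehat\mu_m,\gamma_m)$ is measurable with respect to the history $\mathfrak S_{\tau_{m-1}}$ before epoch $m$. Suppose that with probability at least $1-\delta/2$, for every epoch $m\ge m_0$ with $\tau_{m-1}<T$ and every $\pi\in\Psi$, $\mathrm{Reg}(\pi)\le 2\widehat{\mathrm{Reg}}_m(\pi)+204K/\gamma_m$. Then with probability at least $1-\delta$, $$\sum_{t=1}^{T}\big(y_t(\pi_\mu(x_t))-y_t(a_t)\big)\le \tau_{m_0-1}+206K\sum_{t=\tau_{m_0-1}+1}^{T}\frac{1}{\gamma_{m(t)}}+\sqrt{8(T-\tau_{m_0-1})\log(2/\delta)}.$$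
   Context: Let $\mathcal X$ be a finite set with distribution $\mathcal D_{\mathcal X}$, $\mathcal A=[K]$ the action set, $\mu:\mathcal X\times\mathcal A\to\mathbb R$ the true mean reward function; $\mathfrak S_{t}$ is the sigma-algebra generated by the history up to round $t$. For each epoch $m$, $\widehat\mu_m:\mathcal X\times\mathcal A\to\mathbb R$ is an estimated reward function and $\gamma_m>0$ a spread parameter; $b_m(x)\in\arg\max_i\widehat\mu_m(x,i)$ (fixed tie-breaking), and the kernel is $p_m(i\mid x)=1/\big(K+\gamma_m(\widehat\mu_m(x,b_m(x))-\widehat\mu_m(x,i))\big)$ for $i\ne b_m(x)$, $p_m(b_m(x)\mid x)=1-\sum_{i\ne b_m(x)}p_m(i\mid x)$. $\Psi=\mathcal A^{\mathcal X}$ is the set of deterministic policies. Let $\pi_\mu(x)\in\arg\max_a\mu(x,a)$ and $\pi_{\widehat\mu_m}(x)=b_m(x)$. $R(\pi)=\mathbb E_{x\sim\mathcal D_{\mathcal X}}[\mu(x,\pi(x))]$, $\widehat R_m(\pi)=\mathbb E_{x\sim\mathcal D_{\mathcal X}}[\widehat\mu_m(x,\pi(x))]$, $\mathrm{Reg}(\pi)=R(\pi_\mu)-R(\pi)$, $\widehat{\mathrm{Reg}}_m(\pi)=\widehat R_m(\pi_{\widehat\mu_m})-\widehat R_m(\pi)$. *)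

(* Defs.v *)
From HB Require Import structures.
From mathcomp Require Import all_boot all_order all_algebra.
From mathcomp Require Import all_classical all_reals all_analysis.
Set Implicit Arguments. Unset Strict Implicit. Unset Printing Implicit Defensive.
Import Order.TTheory GRing.Theory Num.Theory.
Local Open Scope classical_set_scope.
Local Open Scope ring_scope.

Definition tau (m : nat) : nat := 2 ^ m.
(* m(t): the epoch containing round t >= 1, i.e. the least m with t <= 2^m *)
Definition epoch (t : nat) : nat := up_log 2 t.

Section Defs.
Variable R : realType.
Variable X : finType.
Variable n : nat.
Local Notation A := 'I_n.+1.
Local Notation K := (n.+1%:R : R).

(* b_m(x) : greedy action with fixed tie-breaking *)
Definition bgreedy (muh : X -> A -> R) (x : X) : A :=
  [arg max_(i > ord0) muh x i]%O.

Definition pker (muh : X -> A -> R) (gam : R) (x : X) (i : A) : R :=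
  let b := bgreedy muh x in
  if i != b then (K + gam * (muh x b - muh x i))^-1
  else 1 - \sum_(j : A | j != b) (K + gam * (muh x b - muh x j))^-1.

Definition Rval (D : X -> R) (f : X -> A -> R) (pi : X -> A) : R :=
  \sum_(x : X) D x * f x (pi x).
Definition Reg (D : X -> R) (mu : X -> A -> R) (pimu : X -> A) (pi : X -> A) : R :=
  Rval D mu pimu - Rval D mu pi.
Definition Reghat (D : X -> R) (muh : X -> A -> R) (pi : X -> A) : R :=
  Rval D muh (bgreedy muh) - Rval D muh pi.

Variables (d : measure_display) (Omega : measurableType d).

Definition hist_gen (x : nat -> Omega -> X) (y : nat -> Omega -> A -> R)
  (a : nat -> Omega -> A) (t : nat) : set (set Omega) :=
  [set S | exists s, (1 <= s <= t)%N /\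
     ((exists c, S = [set w | x s w = c]) \/
      (exists i, S = [set w | a s w = i]) \/
      (exists i (B : set R), measurable B /\ S = [set w | B (y s w i)]))].

Definition hist x y a t : set (set Omega) := <<s hist_gen x y a t >>.

End Defs.

(* Main.v *)
Require Import Defs.
From HB Require Import structures.
From mathcomp Require Import all_boot all_order all_algebra.
From mathcomp Require Import all_classical all_reals all_analysis.
From mathcomp Require Import measurable_realfun ring lra.
Import Order.TTheory GRing.Theory Num.Theory.
Local Open Scope classical_set_scope.
Local Open Scope ring_scope.

Set Implicit Arguments. Unset Strict Implicit. Unset Printing Implicit Defensive.

Section Aux.
Context (R : realType) (d : measure_display) (Omega : measurableType d) (P : probability Omega R).

Definition EE (f : Omega -> R) : R := \int[P]_w f w.
Definition bdd (f : Omega -> R) := measurable_fun setT f /\ exists M : R, forall w, `|f w| <= M.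

Lemma bdd_int f : bdd f -> P.-integrable setT (EFin \o f).
Proof.
move=> [mf [M hM]]; apply: measurable_bounded_integrable => //.
  by apply: (le_lt_trans (probability_le1 P measurableT)); rewrite ltry.
exists M; split; first by rewrite num_real.
move=> r Mr w _; apply: le_trans (hM w) _; exact: ltW.
Qed.

Lemma bdd_cst c : bdd (fun=> c).
Proof. by split; [exact: measurable_cst | exists `|c|]. Qed.

Lemma bddD f g : bdd f -> bdd g -> bdd (fun w => f w + g w).
Proof.
move=> [mf [M hM]] [mg [N hN]]; split; first exact: measurable_funD.
exists (M + N) => w; apply: le_trans (ler_normD _ _) _; exact: lerD.
Qed.

Lemma bddN f : bdd f -> bdd (fun w => - f w).
Proof.
move=> [mf [M hM]]; split; first exact: measurable_funN.
by exists M => w; rewrite normrN.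
Qed.

Lemma bddB f g : bdd f -> bdd g -> bdd (fun w => f w - g w).
Proof. by move=> hf hg; apply: bddD => //; exact: bddN. Qed.

Lemma bddM f g : bdd f -> bdd g -> bdd (fun w => f w * g w).
Proof.
move=> [mf [M hM]] [mg [N hN]]; split; first exact: measurable_funM.
exists (M * N) => w; rewrite normrM; apply: ler_pM => //.
Qed.

Lemma bdd_sum I (s : seq I) (F : I -> Omega -> R) :
  (forall i, bdd (F i)) -> bdd (fun w => \sum_(i <- s) F i w).
Proof.
move=> hF; elim: s => [|i s IH].
  by under [X in bdd X]funext do rewrite big_nil; exact: bdd_cst.
under [X in bdd X]funext do rewrite big_cons; exact: bddD.
Qed.

Lemma bdd_indic (A : set Omega) : measurable A -> bdd (\1_A).
Proof.
move=> mA; split; first exact: measurable_indic.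
by exists 1 => w; rewrite /indic; case: (w \in A); rewrite ?normr1 ?normr0.
Qed.

Lemma bdd_expR f : bdd f -> bdd (fun w => expR (f w)).
Proof.
move=> [mf [M hM]]; split; first exact: (measurableT_comp (@measurable_expR R)).
exists (expR M) => w; rewrite ger0_norm ?expR_ge0 // ler_expR.
exact: le_trans (ler_norm _) (hM w).
Qed.

Lemma EE_D f g : bdd f -> bdd g -> EE (fun w => f w + g w) = EE f + EE g.
Proof. by move=> hf hg; rewrite /EE RintegralD //; exact: bdd_int. Qed.

Lemma EE_B f g : bdd f -> bdd g -> EE (fun w => f w - g w) = EE f - EE g.
Proof. by move=> hf hg; rewrite /EE RintegralB //; exact: bdd_int. Qed.

Lemma EE_Z c f : bdd f -> EE (fun w => c * f w) = c * EE f.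
Proof. by move=> hf; rewrite /EE RintegralZl //; exact: bdd_int. Qed.

Lemma EE_ext f g : (forall w, f w = g w) -> EE f = EE g.
Proof. by move=> fg; congr EE; apply: funext. Qed.

Lemma EE_le f g : bdd f -> bdd g -> (forall w, f w <= g w) -> EE f <= EE g.
Proof.
move=> hf hg fg; rewrite /EE; apply: le_Rintegral => //; try exact: bdd_int.
Qed.

Lemma EE_cst c : EE (fun=> c) = c.
Proof.
rewrite /EE Rintegral_cst //.
rewrite (_ : fine _ = 1) ?mulr1 //.
exact: (congr1 fine (probability_setT P)).
Qed.

Lemma EE_sum I (s : seq I) (F : I -> Omega -> R) :
  (forall i, bdd (F i)) -> EE (fun w => \sum_(i <- s) F i w) = \sum_(i <- s) EE (F i).
Proof.
move=> hF; elim: s => [|i s IH].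
  by rewrite big_nil (EE_ext (g := fun=> 0)) ?EE_cst // => w; rewrite big_nil.
rewrite big_cons -IH -EE_D //; last exact: bdd_sum.
by apply: EE_ext => w; rewrite big_cons.
Qed.

Lemma EE_indic (A : set Omega) : measurable A -> EE (\1_A) = fine (P A).
Proof.
move=> mA; rewrite /EE /Rintegral.
by rewrite integral_indic // setIT.
Qed.

Lemma finP (S : set Omega) : measurable S -> P S \is a fin_num.
Proof. by move=> mS; apply: fin_num_measure. Qed.

Lemma EE_restrict (S : set Omega) f : measurable S ->
  EE (fun w => \1_S w * f w) = fine (\int[P]_(w in S) (f w)%:E).
Proof.
move=> mS; rewrite -[RHS]/(Rintegral P S f) Rintegral_mkcond /EE.
apply: eq_Rintegral => w _; rewrite /patch indicE.
by case: (w \in S); rewrite ?mul1r ?mul0r.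
Qed.

Lemma indicM (S T : set Omega) w : \1_S w * \1_T w = \1_(S `&` T) w :> R.
Proof. by rewrite indicI. Qed.

End Aux.


Lemma zero_of_small (R : realType) (x C : R) :
  (forall N : nat, (0 < N)%N -> `|x| <= C / N%:R) -> x = 0.
Proof.
move=> H; apply/eqP; apply/negPn/negP => x0.
have ax : 0 < `|x| by rewrite normr_gt0.
have C0 : 0 <= C.
  have := H 1%N isT; rewrite divr1 => h; exact: le_trans (normr_ge0 _) h.
set N := (Num.truncn (C / `|x|)).+1.
have HN := H N isT.
have hN : C / `|x| < N%:R by exact: truncnS_gt.
have N0 : 0 < N%:R :> R by rewrite ltr0n.
move: hN; rewrite ltr_pdivrMr // => hN.
have : C / N%:R < `|x| by rewrite ltr_pdivrMr // mulrC.
by rewrite ltNge HN.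
Qed.

Lemma itvco (R : realType) (a b x : R) : `[a, b[%classic x <-> (a <= x < b).
Proof. by rewrite /= in_itv. Qed.

Section Ext.
Context (R : realType) (d : measure_display) (Omega : measurableType d) (P : probability Omega R).
Local Notation EE := (EE P).

Lemma EE_close f g c : bdd f -> bdd g -> (forall w, `|f w - g w| <= c) ->
  `|EE f - EE g| <= c.
Proof.
move=> hf hg H; rewrite -EE_B //; rewrite ler_norml; apply/andP; split.
- rewrite -(EE_cst P (- c)); apply: EE_le => //; first exact: bdd_cst.
  + exact: bddB.
  + by move=> w; have := H w; rewrite ler_norml => /andP[].
- rewrite -(EE_cst P c); apply: EE_le => //; first exact: bddB.
  + exact: bdd_cst.
  + by move=> w; have := H w; rewrite ler_norml => /andP[].
Qed.

Lemma ext_lemma (u h1 h2 : Omega -> R) : bdd u -> bdd h1 -> bdd h2 ->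
  (forall B : set R, measurable B ->
     EE (fun w => \1_(u @^-1` B) w * h1 w) = EE (fun w => \1_(u @^-1` B) w * h2 w)) ->
  EE (fun w => u w * h1 w) = EE (fun w => u w * h2 w).
Proof.
move=> hu hh1 hh2 HB.
have [mu [L hL]] := hu.
have [_ [M1 hM1]] := hh1.
have [_ [M2 hM2]] := hh2.
have L0 : 0 <= L.
  by apply: le_trans (hL point); exact: normr_ge0.
apply/eqP; rewrite -subr_eq0; apply/eqP; apply: (@zero_of_small _ _ (M1 + M2)).
move=> N N0.
have N0' : 0 < N%:R :> R by rewrite ltr0n.
set k := Num.truncn (2 * L * N%:R).
pose I (j : nat) : set R := `[j%:R / N%:R - L, j.+1%:R / N%:R - L[%classic.
have mI j : measurable (I j) by exact: measurable_itv.
have mpre j : measurable (u @^-1` I j).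
  by have := mu measurableT (I j) (mI j); rewrite setTI.
pose s w := \sum_(j < k.+1) (j%:R / N%:R - L) * \1_(u @^-1` I j) w.
have hs : bdd s.
  apply: bdd_sum => j; apply: bddM; [exact: bdd_cst | exact: bdd_indic].
have key : forall w, 0 <= u w - s w <= N%:R^-1.
  move=> w.
  have uL : 0 <= (u w + L) * N%:R.
    apply: mulr_ge0 => //; rewrite -lerBlDr sub0r.
    by have := hL w; rewrite ler_norml => /andP[].
  set j0 := Num.truncn ((u w + L) * N%:R).
  have [hj1 hj2] : (j0%:R <= (u w + L) * N%:R) /\ ((u w + L) * N%:R < j0.+1%:R).
    by have /andP[] := truncn_itv uL.
  have j0k : (j0 < k.+1)%N.
    rewrite ltnS /j0 /k; apply: le_truncn; apply: ler_wpM2r; first exact: ltW.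
    rewrite mulr2n mulrDl mul1r lerD2r.
    by have := hL w; rewrite ler_norml => /andP[].
  have sw : s w = j0%:R / N%:R - L.
    rewrite /s (bigD1 (Ordinal j0k)) //= big1 ?addr0.
      rewrite indicE mem_set ?mulr1 //= /I; apply/itvco.
      by rewrite lerBlDr ltrBrDr ler_pdivrMr // ltr_pdivlMr // hj1 hj2.
    move=> j hj; rewrite indicE; case: (boolP (w \in _)); rewrite ?mulr0 //.
    rewrite inE /= /I => /itvco.
    rewrite lerBlDr ltrBrDr ler_pdivrMr // ltr_pdivlMr // => hh.
    exfalso; move: hj => /eqP; apply; apply: val_inj => /=.
    by apply/esym/truncn_def.
  rewrite sw; apply/andP; split.
    by rewrite subr_ge0 lerBlDr ler_pdivrMr.
  have : u w + L < j0.+1%:R / N%:R by rewrite ltr_pdivlMr.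
  rewrite -natr1 mulrDl mul1r => h.
  lra.
have e1 : EE (fun w => s w * h1 w) = EE (fun w => s w * h2 w).
  rewrite (EE_ext P (g := fun w => \sum_(j < k.+1) (j%:R / N%:R - L) *
                             (\1_(u @^-1` I j) w * h1 w))); last first.
    by move=> w; rewrite /s mulr_suml; apply: eq_bigr => j _; rewrite mulrA.
  rewrite (EE_ext P (f := fun w => s w * h2 w) (g := fun w => \sum_(j < k.+1) (j%:R / N%:R - L) *
                             (\1_(u @^-1` I j) w * h2 w))); last first.
    by move=> w; rewrite /s mulr_suml; apply: eq_bigr => j _; rewrite mulrA.
  rewrite !EE_sum; last first.
  - by move=> j; apply: bddM; [exact: bdd_cst| apply: bddM => //; exact: bdd_indic].
  - by move=> j; apply: bddM; [exact: bdd_cst| apply: bddM => //; exact: bdd_indic].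
  apply: eq_bigr => j _; rewrite !EE_Z; first by rewrite HB.
  + by apply: bddM => //; exact: bdd_indic.
  + by apply: bddM => //; exact: bdd_indic.
have c1 : `|EE (fun w => u w * h1 w) - EE (fun w => s w * h1 w)| <= M1 / N%:R.
  apply: EE_close; [exact: bddM|exact: bddM|] => w.
  rewrite -mulrBl normrM mulrC; apply: ler_pM => //.
  by have /andP[k1 k2] := key w; rewrite ger0_norm.
have c2 : `|EE (fun w => u w * h2 w) - EE (fun w => s w * h2 w)| <= M2 / N%:R.
  apply: EE_close; [exact: bddM|exact: bddM|] => w.
  rewrite -mulrBl normrM mulrC; apply: ler_pM => //.
  by have /andP[k1 k2] := key w; rewrite ger0_norm.
rewrite mulrDl; apply: le_trans (lerD c1 c2).
rewrite (distrC (EE (fun w => u w * h2 w))) -e1.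
by apply: le_trans (ler_normD _ _); rewrite addrA subrK.
Qed.
End Ext.


Lemma measurable_inv (R : realType) : measurable_fun setT (@GRing.inv R).
Proof.
have -> : [set: R] = [set 0] `|` ~` [set 0] by rewrite setUv.
apply/measurable_funU => //; first by apply: measurableC.
split; first exact: measurable_fun_set1.
apply: open_continuous_measurable_fun.
  by apply: closed_openC; apply: accessible_closed_set1; apply: hausdorff_accessible; exact: Rhausdorff.
by move=> x /set_mem /= x0; apply: inv_continuous; apply/eqP.
Qed.

Lemma meas_le d' (T : measurableType d') (R : realType) (f g : T -> R) :
  measurable_fun setT f -> measurable_fun setT g -> measurable [set w | f w <= g w].
Proof.
move=> mf mg; have mt : measurable [set true] by [].
have := measurable_fun_ler mf mg measurableT mt.
rewrite setTI; congr measurable; apply/seteqP; split => w /=; by [].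
Qed.

Lemma pick_meas d' (T : measurableType d') (I : finType) (j0 : I) (q : T -> I -> bool) :
  (forall j, measurable [set w | q w j]) ->
  forall b, measurable [set w | odflt j0 [pick j | q w j] = b].
Proof.
move=> mq b.
have mq' j v : measurable [set w | q w j = v].
  case: v; first by congr measurable: (mq j); apply/seteqP; split=> w /=.
  rewrite (_ : [set w | q w j = false] = ~` [set w | q w j]); first exact: measurableC.
  by apply/seteqP; split=> w /=; case: (q w j).
rewrite (_ : [set w | odflt j0 [pick j | q w j] = b] =
  \bigcup_(f in [set f : {ffun I -> bool} | odflt j0 [pick j | f j] = b])
    \bigcap_(j in [set: I]) [set w | q w j = f j]).
  apply: fin_bigcup_measurable; first exact: finite_finset.
  move=> f _; apply: fin_bigcap_measurable; first exact: finite_finset.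
  by move=> j _; exact: mq'.
apply/seteqP; split => w /=.
- move=> h; exists [ffun j => q w j].
    by rewrite /= -h; congr odflt; apply: eq_pick => j; rewrite ffunE.
  by move=> j _; rewrite /= ffunE.
- case=> f /= hf hw; rewrite -hf; congr odflt; apply: eq_pick => j.
  exact: hw.
Qed.

Section Greedy.
Context (R : realType) (X : finType) (n : nat).
Local Notation A := 'I_n.+1.
Local Notation K := (n.+1%:R : R).

Lemma bgreedyE (muh : X -> A -> R) c :
  bgreedy muh c = odflt ord0 [pick i | [forall j, muh c j <= muh c i]].
Proof. by rewrite /bgreedy /Order.arg_max /extremum; congr odflt; apply: eq_pick. Qed.

Lemma bgreedy_max (muh : X -> A -> R) c j : muh c j <= muh c (bgreedy muh c).
Proof. by rewrite /bgreedy; case: arg_maxP => //= i _ H; exact: H. Qed.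

Lemma bgreedy_meas d' (T : measurableType d') (mh : T -> X -> A -> R) c b :
  (forall j, measurable_fun setT (fun w => mh w c j)) ->
  measurable [set w | bgreedy (mh w) c = b].
Proof.
move=> mm.
rewrite (_ : [set w | bgreedy (mh w) c = b] =
   [set w | odflt ord0 [pick i | [forall j, mh w c j <= mh w c i]] = b]); last first.
  by apply/seteqP; split => w /=; rewrite bgreedyE.
apply: pick_meas => i.
rewrite (_ : [set w | [forall j, mh w c j <= mh w c i]] =
   \bigcap_(j in [set: A]) [set w | mh w c j <= mh w c i]).
  apply: fin_bigcap_measurable; first exact: finite_finset.
  by move=> j _; apply: meas_le.
apply/seteqP; split => w /=.
- by move=> /forallP H j _; exact: H.
- by move=> H; apply/forallP => j; exact: H.
Qed.

Lemma pker_meas d' (T : measurableType d') (mh : T -> X -> A -> R) (g : T -> R) c i :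
  (forall j, measurable_fun setT (fun w => mh w c j)) -> measurable_fun setT g ->
  measurable_fun setT (fun w => pker (mh w) (g w) c i).
Proof.
move=> mm mg.
pose e (b : A) w := if i != b then (K + g w * (mh w c b - mh w c i))^-1
  else 1 - \sum_(j : A | j != b) (K + g w * (mh w c b - mh w c j))^-1.
have -> : (fun w => pker (mh w) (g w) c i) =
    (fun w => \sum_(b : A) \1_[set w | bgreedy (mh w) c = b] w * e b w).
  apply: funext => w; rewrite (bigD1 (bgreedy (mh w) c)) //= big1 ?addr0.
    by rewrite indicE mem_set // mul1r /e /pker.
  move=> b hb; rewrite indicE memNset ?mul0r //= => h.
  by move: hb; rewrite h eqxx.
have minv (f : T -> R) : measurable_fun setT f -> measurable_fun setT (fun w => (f w)^-1).
  by move=> mf; apply: (measurableT_comp (@measurable_inv R)).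
have mden j b : measurable_fun setT (fun w => (K + g w * (mh w c b - mh w c j))^-1).
  apply: minv; apply: measurable_funD => //; apply: measurable_funM => //.
  exact: measurable_funB.
apply: (@measurable_sum _ _ _ _ _ _ (fun b w => \1_[set w | bgreedy (mh w) c = b] w * e b w)) => b.
apply: measurable_funM.
  by apply: measurable_indic; exact: bgreedy_meas.
rewrite /e; case: (i != b) => //.
apply: measurable_funB => //.
under [X in measurable_fun _ X]eq_fun do rewrite big_mkcond /=.
apply: (@measurable_sum _ _ _ _ _ _ (fun j w => if j != b
  then (K + g w * (mh w c b - mh w c j))^-1 else 0)) => j.
by case: (j != b).
Qed.

Lemma greedy_val_meas d' (T : measurableType d') (mh : T -> X -> A -> R) c :
  (forall j, measurable_fun setT (fun w => mh w c j)) ->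
  measurable_fun setT (fun w => mh w c (bgreedy (mh w) c)).
Proof.
move=> mm.
have -> : (fun w => mh w c (bgreedy (mh w) c)) =
    (fun w => \sum_(b : A) \1_[set w | bgreedy (mh w) c = b] w * mh w c b).
  apply: funext => w; rewrite (bigD1 (bgreedy (mh w) c)) //= big1 ?addr0.
    by rewrite indicE mem_set // mul1r.
  move=> b hb; rewrite indicE memNset ?mul0r //= => h.
  by move: hb; rewrite h eqxx.
apply: (@measurable_sum _ _ _ _ _ _ (fun b w => \1_[set w | bgreedy (mh w) c = b] w * mh w c b)) => b.
apply: measurable_funM => //.
by apply: measurable_indic; exact: bgreedy_meas.
Qed.

Section PkerProps.
Variables (muh : X -> A -> R) (gam : R) (c : X).
Hypothesis gam0 : 0 < gam.
Let b := bgreedy muh c.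
Let q j := (K + gam * (muh c b - muh c j))^-1.

Let Delta0 j : 0 <= muh c b - muh c j.
Proof. by rewrite subr_ge0; exact: bgreedy_max. Qed.

Let den_ge j : K <= K + gam * (muh c b - muh c j).
Proof. by rewrite lerDl mulr_ge0 // ltW. Qed.

Let K0 : 0 < K. Proof. by rewrite ltr0n. Qed.

Let q_pos j : 0 < q j.
Proof. by rewrite /q invr_gt0; apply: lt_le_trans K0 (den_ge j). Qed.

Let q_le j : q j <= K^-1.
Proof. by rewrite /q lef_pV2 ?posrE //; apply: lt_le_trans K0 (den_ge j). Qed.

Let sumq : \sum_(j : A | j != b) q j <= 1 - K^-1.
Proof.
apply: le_trans (ler_sum _ (fun j _ => q_le j)) _.
rewrite sumr_const cardC1 card_ord /=.
have e : n%:R * K^-1 + K^-1 = 1.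
  by rewrite -[X in _ + X](mul1r K^-1) -mulrDl natr1 divff // lt0r_neq0.
by rewrite -[K^-1 *+ n]mulr_natl -[X in _ <= X - _]e addrK.
Qed.

Lemma pker_neq i : i != b -> pker muh gam c i = q i.
Proof. by rewrite /pker -/b => ->. Qed.

Lemma pker_ge0 i : 0 <= pker muh gam c i.
Proof.
case: (eqVneq i b) => [->|hi]; last by rewrite pker_neq // ltW.
rewrite /pker -/b eqxx /=; rewrite subr_ge0; apply: le_trans sumq _.
by rewrite lerBlDr lerDl invr_ge0 ltW.
Qed.

Lemma pker_sum : \sum_(i : A) pker muh gam c i = 1.
Proof.
rewrite (bigD1 b) //= /pker -/b eqxx /=.
rewrite [X in _ + X](eq_bigr q) ?subrK //.
by move=> j hj; rewrite hj.
Qed.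

Lemma pker_le1 i : pker muh gam c i <= 1.
Proof.
rewrite -pker_sum (bigD1 i) //= lerDl; apply: sumr_ge0 => j _; exact: pker_ge0.
Qed.

Lemma pker_gap i : pker muh gam c i * (muh c b - muh c i) <= gam^-1.
Proof.
case: (eqVneq i b) => [->|hi]; first by rewrite subrr mulr0 invr_ge0 ltW.
rewrite pker_neq // /q; have D0 := Delta0 i.
have dpos : 0 < K + gam * (muh c b - muh c i) by apply: lt_le_trans K0 (den_ge i).
rewrite mulrC ler_pdivrMr // ler_pdivlMl // lerDr; exact: ltW.
Qed.

End PkerProps.
End Greedy.


Lemma expR_quad (R : realType) (z : R) : -1 <= z <= 1 -> expR z <= 1 + z + 2 * z ^+ 2.
Proof.
move=> /andP[z1 z2].
case: (lerP z 0) => hz.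
- have h1 := expR_ge1Dx (- z).
  have h2 : expR z * expR (- z) = 1 by rewrite expRxMexpNx_1.
  have h3 := expR_gt0 z.
  nra.
- have e2 : expR z = expR (z / 2) ^+ 2.
    by rewrite -expRM_natr; congr expR; field.
  have h1 := expR_ge1Dx (- (z / 2)).
  have h2 : expR (z / 2) * expR (- (z / 2)) = 1 by rewrite expRxMexpNx_1.
  have h3 := expR_gt0 (z / 2).
  have h4 := expR_gt0 (- (z / 2)).
  set e := expR (z / 2) in e2 h2 h3 *.
  set f := expR (- (z / 2)) in h1 h2 h4 *.
  rewrite e2.
  have hef : e * (1 - z / 2) <= 1.
    by rewrite -[X in _ <= X]h2; apply: ler_wpM2l; [exact: ltW | lra].
  have hint : 0 <= ((1 - z) * (5 / 4 - z / 2)) * z ^+ 2.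
    by apply: mulr_ge0; [apply: mulr_ge0; lra | exact: sqr_ge0].
  have poly : 1 <= (1 - z / 2) ^+ 2 * (1 + z + 2 * z ^+ 2).
    by rewrite -subr_ge0 (_ : _ - 1 = ((1 - z) * (5 / 4 - z / 2)) * z ^+ 2) //; field.
  have pos : 0 < 1 - z / 2 by lra.
  have : (e * (1 - z / 2)) ^+ 2 <= 1.
    have x0 : 0 <= e * (1 - z / 2) by apply: mulr_ge0; [exact: ltW | exact: ltW].
    by rewrite expr2; apply: mulr_ile1.
  nra.
Qed.

Section RegAlg.
Context (R : realType) (X : finType) (n : nat).
Local Notation A := 'I_n.+1.
Local Notation K := (n.+1%:R : R).

Lemma regret_alg (D : X -> R) (mu : X -> A -> R) (pimu : X -> A) (muh : X -> A -> R) (gam : R) :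
  0 < gam -> (forall c, 0 <= D c) -> \sum_c D c = 1 ->
  (forall pi : X -> A, Reg D mu pimu pi <= 2 * Reghat D muh pi + 204 * K / gam) ->
  \sum_c D c * mu c (pimu c) - \sum_c \sum_i D c * mu c i * pker muh gam c i
    <= 206 * K / gam.
Proof.
move=> g0 D0 D1 Hr.
pose b c := bgreedy muh c.
pose g c i := (mu c (pimu c) - mu c i) - 2 * (muh c (b c) - muh c i).
pose pis c := [arg max_(i > ord0) g c i]%O.
have Hg c i : g c i <= g c (pis c).
  by rewrite /pis; case: arg_maxP => //= j _ H; exact: H.
have H := Hr pis.
have Hs : \sum_c D c * g c (pis c) <= 204 * K / gam.
  move: H; rewrite /Reg /Reghat /Rval => H.
  apply: le_trans _ (_ : _ <= 204 * K / gam); last by [].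
  have -> : \sum_c D c * g c (pis c) =
      (\sum_c D c * mu c (pimu c) - \sum_c D c * mu c (pis c)) -
      2 * (\sum_c D c * muh c (bgreedy muh c) - \sum_c D c * muh c (pis c)).
    rewrite -!sumrB mulr_sumr -sumrB; apply: eq_bigr => c _.
    by rewrite /g /b; ring.
  lra.
have Hc c : D c * mu c (pimu c) - \sum_i D c * mu c i * pker muh gam c i
   <= D c * g c (pis c) + D c * (2 * K / gam).
  rewrite -mulrDr.
  have -> : \sum_i D c * mu c i * pker muh gam c i = D c * \sum_i mu c i * pker muh gam c i.
    by rewrite mulr_sumr; apply: eq_bigr => i _; rewrite mulrA.
  rewrite -mulrBr; apply: ler_wpM2l => //.
  have -> : mu c (pimu c) - \sum_i mu c i * pker muh gam c i =
      \sum_i pker muh gam c i * g c i +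
      2 * \sum_i pker muh gam c i * (muh c (b c) - muh c i).
    rewrite mulr_sumr -big_split /=.
    have -> : mu c (pimu c) = \sum_i pker muh gam c i * mu c (pimu c).
      by rewrite -mulr_suml pker_sum // mul1r.
    rewrite -sumrB; apply: eq_bigr => i _; rewrite /g; ring.
  apply: lerD.
    apply: le_trans (_ : _ <= \sum_i pker muh gam c i * g c (pis c)) _.
      by apply: ler_sum => i _; apply: ler_wpM2l; [exact: pker_ge0|exact: Hg].
    by rewrite -mulr_suml pker_sum // mul1r.
  rewrite -mulrA; apply: ler_wpM2l => //.
  apply: le_trans (_ : _ <= \sum_(i : A) gam^-1) _.
    by apply: ler_sum => i _; exact: pker_gap.
  by rewrite sumr_const card_ord -[_ *+ _]mulr_natl.
rewrite -sumrB; apply: le_trans (ler_sum _ (fun c _ => Hc c)) _.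
rewrite big_split /= -mulr_suml D1 mul1r.
have -> : 206 * K / gam = 204 * K / gam + 2 * K / gam.
  by rewrite -!mulrDl -natrD.
by rewrite lerD2r.
Qed.
End RegAlg.


Section Main.
Variables (R : realType) (X : finType) (n : nat)
  (D : X -> R) (mu : X -> 'I_n.+1 -> R) (pimu : X -> 'I_n.+1)
  (d : measure_display) (Omega : measurableType d) (P : probability Omega R)
  (x : nat -> Omega -> X) (y : nat -> Omega -> 'I_n.+1 -> R)
  (a : nat -> Omega -> 'I_n.+1)
  (muhat : nat -> Omega -> X -> 'I_n.+1 -> R) (gamma : nat -> Omega -> R)
  (m0 T : nat) (delta : R).
Hypotheses (HD0 : forall c, 0 <= D c) (HD1 : \sum_(c : X) D c = 1)
  (Hpimu : forall c i, mu c i <= mu c (pimu c))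
  (Hm0 : (1 <= m0)%N) (HT : (tau (m0 - 1) < T)%N)
  (Hdelta : 0 < delta < 1)
  (Hxm : forall t c, measurable [set w | x t w = c])
  (Ham : forall t i, measurable [set w | a t w = i])
  (Hym : forall t i, measurable_fun setT (fun w => y t w i))
  (Hy01 : forall t w i, 0 <= y t w i <= 1)
  (Hxind : forall t, (1 <= t)%N -> forall S c, hist x y a t.-1 S ->
     (P (S `&` [set w | x t w = c]) = (D c)%:E * P S)%E)
  (Hycond : forall t, (1 <= t)%N -> forall S c i, hist x y a t.-1 S ->
     (\int[P]_(w in S `&` [set w | x t w = c]) (y t w i)%:E =
      (mu c i)%:E * P (S `&` [set w | x t w = c]))%E)
  (Hmuhm : forall m, (m0 <= m)%N -> forall c i (B : set R), measurable B ->
     hist x y a (tau (m - 1)) [set w | B (muhat m w c i)])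
  (Hgamm : forall m, (m0 <= m)%N -> forall (B : set R), measurable B ->
     hist x y a (tau (m - 1)) [set w | B (gamma m w)])
  (Hgam0 : forall m w, (m0 <= m)%N -> 0 < gamma m w)
  (Hact : forall t, (tau (m0 - 1) < t)%N ->
     forall S c (B : 'I_n.+1 -> set R) i,
     hist x y a t.-1 S -> (forall j, measurable (B j)) ->
     let E := S `&` [set w | x t w = c] `&` [set w | forall j, B j (y t w j)] in
     P (E `&` [set w | a t w = i]) =
     (\int[P]_(w in E) (pker (muhat (epoch t) w) (gamma (epoch t) w) c i)%:E)%E).

Local Notation A := 'I_n.+1.
Local Notation K := (n.+1%:R : R).
Local Notation EE := (EE P).
Local Notation H k := (hist x y a k).
Local Notation GT k := (g_sigma_algebraType (hist_gen x y a k)).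

Definition Fm k (f : Omega -> R) := measurable_fun (T := GT k) setT f.

Lemma hist_meas k : H k `<=` measurable.
Proof.
apply: smallest_sub; first exact: sigma_algebra_measurable.
move=> S [s [_ [[c ->]|[[i ->]|[i [B [mB ->]]]]]]]; [exact: Hxm|exact: Ham|].
by have := Hym s i measurableT mB; rewrite setTI.
Qed.

Lemma hist_mono k k' : (k <= k')%N -> H k `<=` H k'.
Proof.
move=> kk; apply: sub_sigma_algebra2 => S [s [hs hS]]; exists s; split; last exact: hS.
by move: hs => /andP[h1 h2]; apply/andP; split => //; exact: leq_trans h2 kk.
Qed.

Lemma Fm_pre k f B : Fm k f -> measurable B -> H k [set w | B (f w)].
Proof. by move=> mf mB; have := mf measurableT B mB; rewrite setTI. Qed.

Lemma Fm_meas k f : Fm k f -> measurable_fun setT f.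
Proof.
move=> mf _ B mB; rewrite setTI; exact: (hist_meas (Fm_pre mf mB)).
Qed.

Lemma Fm_mono k k' f : (k <= k')%N -> Fm k f -> Fm k' f.
Proof.
move=> kk mf _ B mB; rewrite setTI; exact: (hist_mono kk (Fm_pre mf mB)).
Qed.

Lemma Fm_y k s i : (1 <= s <= k)%N -> Fm k (fun w => y s w i).
Proof.
move=> hs _ B mB; rewrite setTI; apply: sub_sigma_algebra.
by exists s; split => //; right; right; exists i, B.
Qed.

Lemma Hk_x k s c : (1 <= s <= k)%N -> H k [set w | x s w = c].
Proof. by move=> hs; apply: sub_sigma_algebra; exists s; split => //; left; exists c. Qed.

Lemma Hk_a k s i : (1 <= s <= k)%N -> H k [set w | a s w = i].
Proof. by move=> hs; apply: sub_sigma_algebra; exists s; split => //; right; left; exists i. Qed.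

Lemma Fm_indic k (S : set Omega) : H k S -> Fm k (\1_S).
Proof. by move=> hS; apply: (@measurable_indic _ (GT k)). Qed.

Lemma Fm_muhat m k c i : (m0 <= m)%N -> (tau (m - 1) <= k)%N -> Fm k (fun w => muhat m w c i).
Proof.
move=> hm hk _ B mB; rewrite setTI; exact: (hist_mono hk (Hmuhm hm c i mB)).
Qed.

Lemma Fm_gamma m k : (m0 <= m)%N -> (tau (m - 1) <= k)%N -> Fm k (gamma m).
Proof.
move=> hm hk _ B mB; rewrite setTI; exact: (hist_mono hk (Hgamm hm mB)).
Qed.

Lemma Fm_bdd k f M : Fm k f -> (forall w, `|f w| <= M) -> bdd f.
Proof. by move=> mf hM; split; [exact: Fm_meas mf | exists M]. Qed.

Lemma bdd_y t i : bdd (fun w => y t w i).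
Proof.
split; first exact: Hym.
exists 1 => w; have /andP[h1 h2] := Hy01 t w i; by rewrite ger0_norm.
Qed.

Lemma bdd_Xc t c : bdd (\1_[set w | x t w = c] : Omega -> R).
Proof. exact: bdd_indic. Qed.

Lemma bdd_Ai t i : bdd (\1_[set w | a t w = i] : Omega -> R).
Proof. exact: bdd_indic. Qed.

Lemma I1 t c j G : (1 <= t)%N -> Fm t.-1 G -> bdd G ->
  EE (fun w => G w * (\1_[set w | x t w = c] w * y t w j)) =
  mu c j * EE (fun w => G w * \1_[set w | x t w = c] w).
Proof.
move=> ht hG bG.
rewrite (@ext_lemma _ _ _ P G _ (fun w => mu c j * \1_[set w | x t w = c] w)) //.
- rewrite -EE_Z; last by apply: bddM => //; exact: bdd_Xc.
  by apply: EE_ext => w; ring.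
- by apply: bddM; [exact: bdd_Xc | exact: bdd_y].
- by apply: bddM; [exact: bdd_cst | exact: bdd_Xc].
move=> B mB.
have hS : H t.-1 (G @^-1` B) by exact: Fm_pre hG mB.
have mS := hist_meas hS.
have mSX : measurable (G @^-1` B `&` [set w | x t w = c]) by apply: measurableI.
rewrite (EE_ext P (g := fun w => \1_(G @^-1` B `&` [set w | x t w = c]) w * y t w j)); last first.
  by move=> w; rewrite mulrA indicM.
rewrite (EE_ext P (f := fun w => _ * (mu c j * _))
   (g := fun w => mu c j * \1_(G @^-1` B `&` [set w | x t w = c]) w)); last first.
  by move=> w; rewrite mulrCA indicM.
rewrite EE_restrict // Hycond // EE_Z; last exact: bdd_indic.
rewrite EE_indic // fineM //; exact: finP.
Qed.

Lemma I2 t c G : (1 <= t)%N -> Fm t.-1 G -> bdd G ->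
  EE (fun w => G w * \1_[set w | x t w = c] w) = D c * EE G.
Proof.
move=> ht hG bG.
rewrite (@ext_lemma _ _ _ P G _ (fun=> D c)) //.
- rewrite -EE_Z //; by apply: EE_ext => w; ring.
- exact: bdd_Xc.
- exact: bdd_cst.
move=> B mB.
have hS : H t.-1 (G @^-1` B) by exact: Fm_pre hG mB.
have mS := hist_meas hS.
have mSX : measurable (G @^-1` B `&` [set w | x t w = c]) by apply: measurableI.
rewrite (EE_ext P (g := fun w => \1_(G @^-1` B `&` [set w | x t w = c]) w)); last first.
  by move=> w; rewrite indicM.
rewrite (EE_ext P (f := fun w => _ * D c) (g := fun w => D c * \1_(G @^-1` B) w)); last first.
  by move=> w; rewrite mulrC.
rewrite EE_indic // Hxind // EE_Z; last exact: bdd_indic.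
rewrite EE_indic // fineM //; exact: finP.
Qed.

Local Notation t0 := (tau (m0 - 1)).

Lemma tau_gt0 m : (0 < tau m)%N.
Proof. by rewrite /tau expn_gt0. Qed.

Lemma epoch_ge t : (t0 < t)%N -> (m0 <= epoch t)%N.
Proof.
move=> ht; rewrite leqNgt; apply/negP => h.
have h1 : (t <= 2 ^ epoch t)%N by apply: up_logP.
have h2 : (2 ^ epoch t <= 2 ^ (m0 - 1))%N.
  by rewrite leq_exp2l //; move: h; rewrite /epoch; case: m0 Hm0 => // m _; rewrite subn1 /= ltnS.
by move: ht; rewrite /tau ltnNge (leq_trans h1 h2).
Qed.

Lemma t_gt1 t : (t0 < t)%N -> (1 < t)%N.
Proof. by move=> ht; apply: leq_ltn_trans ht; exact: tau_gt0. Qed.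

Lemma epoch_tau t : (t0 < t)%N -> (tau (epoch t - 1) <= t.-1)%N.
Proof.
move=> ht; have h := @up_log_gtn 2 t isT (t_gt1 ht).
by rewrite /tau /epoch subn1 -ltnS prednK // ltnW // (t_gt1 ht).
Qed.

Definition p t c i w := pker (muhat (epoch t) w) (gamma (epoch t) w) c i.

Lemma Fm_p t c i : (t0 < t)%N -> Fm t.-1 (p t c i).
Proof.
move=> ht; rewrite /Fm /p.
apply: (@pker_meas _ _ _ _ (GT t.-1) (muhat (epoch t)) (gamma (epoch t))).
  by move=> j; apply: Fm_muhat; [exact: epoch_ge | exact: epoch_tau].
by apply: Fm_gamma; [exact: epoch_ge | exact: epoch_tau].
Qed.

Lemma p_ge0 t c i w : (t0 < t)%N -> 0 <= p t c i w.
Proof. by move=> ht; apply: pker_ge0; apply: Hgam0; exact: epoch_ge. Qed.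

Lemma p_le1 t c i w : (t0 < t)%N -> p t c i w <= 1.
Proof. by move=> ht; apply: pker_le1; apply: Hgam0; exact: epoch_ge. Qed.

Lemma p_sum t c w : (t0 < t)%N -> \sum_i p t c i w = 1.
Proof. by move=> ht; apply: pker_sum; apply: Hgam0; exact: epoch_ge. Qed.

Lemma bdd_p t c i : (t0 < t)%N -> bdd (p t c i).
Proof.
move=> ht; apply: (@Fm_bdd t.-1 _ 1); first exact: Fm_p.
by move=> w; rewrite ger0_norm ?p_ge0 ?p_le1.
Qed.

Lemma I3a t c i (S : set Omega) : (t0 < t)%N -> H t.-1 S ->
  EE (fun w => y t w i * (\1_S w * \1_[set w | x t w = c] w * \1_[set w | a t w = i] w)) =
  EE (fun w => y t w i * (\1_S w * \1_[set w | x t w = c] w * p t c i w)).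
Proof.
move=> ht hS; have mS := hist_meas hS.
apply: ext_lemma.
- exact: bdd_y.
- apply: bddM; [apply: bddM; [exact: bdd_indic|exact: bdd_Xc]|exact: bdd_Ai].
- apply: bddM; [apply: bddM; [exact: bdd_indic|exact: bdd_Xc]|exact: bdd_p].
move=> B mB.
pose Bf (j : A) := if j == i then B else setT.
have mBf j : measurable (Bf j) by rewrite /Bf; case: (j == i).
have eB : [set w | forall j, Bf j (y t w j)] = (fun w => y t w i) @^-1` B.
  apply/seteqP; split => w /=.
  - by move=> h; have := h i; rewrite /Bf eqxx.
  - by move=> h j; rewrite /Bf; case: eqP => [->|].
have := Hact ht c i hS mBf; rewrite /= eB => hA.
set E := S `&` [set w | x t w = c] `&` (fun w => y t w i) @^-1` B in hA.
have mE : measurable E.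
  apply: measurableI; first by apply: measurableI.
  by have := Hym t i measurableT mB; rewrite setTI.
have mEA : measurable (E `&` [set w | a t w = i]) by apply: measurableI.
rewrite (EE_ext P (g := \1_(E `&` [set w | a t w = i]))); last first.
  by move=> w; rewrite /E -!indicM; ring.
rewrite [RHS](EE_ext P (g := fun w => \1_E w * p t c i w)); last first.
  by move=> w; rewrite /E -!indicM; ring.
by rewrite EE_indic // hA EE_restrict.
Qed.

Lemma I3 t c i G : (t0 < t)%N -> Fm t.-1 G -> bdd G ->
  EE (fun w => G w * (y t w i * (\1_[set w | x t w = c] w * \1_[set w | a t w = i] w))) =
  EE (fun w => G w * (y t w i * (\1_[set w | x t w = c] w * p t c i w))).
Proof.
move=> ht hG bG; apply: ext_lemma => //.
- apply: bddM; [exact: bdd_y|apply: bddM; [exact: bdd_Xc|exact: bdd_Ai]].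
- apply: bddM; [exact: bdd_y|apply: bddM; [exact: bdd_Xc|exact: bdd_p]].
move=> B mB.
have hS : H t.-1 (G @^-1` B) by exact: Fm_pre hG mB.
have := I3a c i ht hS => e.
rewrite (EE_ext P (g := fun w => y t w i * (\1_(G @^-1` B) w * \1_[set w | x t w = c] w *
   \1_[set w | a t w = i] w))); last by move=> w; ring.
rewrite e; apply: EE_ext => w; ring.
Qed.

Lemma Y1E t w : y t w (pimu (x t w)) = \sum_c \1_[set w | x t w = c] w * y t w (pimu c).
Proof.
rewrite (bigD1 (x t w)) //= big1 ?addr0; first by rewrite indicE mem_set // mul1r.
by move=> c hc; rewrite indicE memNset ?mul0r //= => h; move: hc; rewrite h eqxx.
Qed.

Lemma Y2E t w : y t w (a t w) =
  \sum_c \sum_i \1_[set w | x t w = c] w * \1_[set w | a t w = i] w * y t w i.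
Proof.
rewrite (bigD1 (x t w)) //= [X in _ + X]big1 ?addr0; last first.
  move=> c hc; apply: big1 => i _.
  by rewrite indicE memNset ?mul0r //= => h; move: hc; rewrite h eqxx.
rewrite (bigD1 (a t w)) //= [X in _ + X]big1 ?addr0; first by rewrite !indicE !mem_set // !mul1r.
by move=> i hi; rewrite [X in _ * X * _]indicE memNset ?mulr0 ?mul0r //= => h; move: hi; rewrite h eqxx.
Qed.

Lemma bddX2 (f : Omega -> R) : bdd f -> bdd (fun w => f w ^+ 2).
Proof. by move=> hf; under [X in bdd X]funext do rewrite expr2; exact: bddM. Qed.

Ltac bddt := repeat match goal with
 | |- forall _, _ => move=> ?
 | |- bdd (fun _ => _ * _) => apply: bddM
 | |- bdd (fun _ => _ + _) => apply: bddD
 | |- bdd (fun _ => _ - _) => apply: bddB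
 | |- bdd (fun _ => - _) => apply: bddN
 | |- bdd (fun _ => expR _) => apply: bdd_expR
 | |- bdd (fun _ => _ ^+ 2) => apply: bddX2
 | |- bdd (fun _ => \sum_(_ <- _ | _) _) => apply: bdd_sum
 | _ => first [exact: bdd_y | exact: bdd_Xc | exact: bdd_Ai | exact: bdd_cst
               | (apply: bdd_p; assumption) | (apply: bdd_indic; assumption) | assumption]
 end.

Definition mu1 := \sum_c D c * mu c (pimu c).
Definition mu2 t w := \sum_c \sum_i D c * mu c i * p t c i w.

Lemma D1 t G : (1 <= t)%N -> Fm t.-1 G -> bdd G ->
  EE (fun w => G w * y t w (pimu (x t w))) = mu1 * EE G.
Proof.
move=> ht hG bG.
rewrite (EE_ext P (g := fun w => \sum_c G w * (\1_[set w | x t w = c] w * y t w (pimu c)))); last first.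
  by move=> w; rewrite Y1E mulr_sumr.
rewrite EE_sum; last by move=> c; apply: bddM => //; apply: bddM; [exact: bdd_Xc|exact: bdd_y].
rewrite /mu1 mulr_suml; apply: eq_bigr => c _.
by rewrite I1 // I2 //; ring.
Qed.

Lemma bdd_mu2 t : (t0 < t)%N -> bdd (mu2 t).
Proof.
move=> ht; apply: bdd_sum => c; apply: bdd_sum => i; apply: bddM; first exact: bdd_cst.
exact: bdd_p.
Qed.

Lemma Fm_mu2 t : (t0 < t)%N -> Fm t.-1 (mu2 t).
Proof.
move=> ht; rewrite /Fm /mu2.
apply: (@measurable_sum _ (GT t.-1) _ _ _ _ (fun c w => \sum_i D c * mu c i * p t c i w)) => c.
apply: (@measurable_sum _ (GT t.-1) _ _ _ _ (fun i w => D c * mu c i * p t c i w)) => i.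
apply: measurable_funM; first exact: measurable_cst.
exact: Fm_p.
Qed.

Lemma D2 t G : (t0 < t)%N -> Fm t.-1 G -> bdd G ->
  EE (fun w => G w * y t w (a t w)) = EE (fun w => G w * mu2 t w).
Proof.
move=> ht hG bG; have t1 : (1 <= t)%N by apply: ltnW; exact: t_gt1.
rewrite (EE_ext P (g := fun w => \sum_c \sum_i G w * (y t w i *
   (\1_[set w | x t w = c] w * \1_[set w | a t w = i] w)))); last first.
  move=> w; rewrite Y2E mulr_sumr; apply: eq_bigr => c _; rewrite mulr_sumr.
  by apply: eq_bigr => i _; ring.
rewrite [RHS](EE_ext P (g := fun w => \sum_c \sum_i (D c * mu c i) * (G w * p t c i w))); last first.
  move=> w; rewrite /mu2 mulr_sumr; apply: eq_bigr => c _; rewrite mulr_sumr.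
  by apply: eq_bigr => i _; ring.
have bGp c i : bdd (fun w => G w * p t c i w) by apply: bddM => //; exact: bdd_p.
have FGp c i : Fm t.-1 (fun w => G w * p t c i w).
  by rewrite /Fm; apply: measurable_funM => //; exact: Fm_p.
rewrite !EE_sum; try by bddt.
apply: eq_bigr => c _.
rewrite !EE_sum; try by bddt.
apply: eq_bigr => i _.
rewrite I3 // (EE_ext P (g := fun w => (G w * p t c i w) *
   (\1_[set w | x t w = c] w * y t w i))); last by move=> w; ring.
rewrite I1 // I2 // EE_Z //; ring.
Qed.

Lemma Dmu c i : 0 <= D c * mu c i <= D c.
Proof.
have F0 : Fm 0 (fun=> 1) by exact: measurable_cst.
have h1 := @I1 1 c i (fun=> 1) isT F0 (bdd_cst _ _).
have h2 := @I2 1 c (fun=> 1) isT F0 (bdd_cst _ _).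
rewrite (EE_cst P) mulr1 in h2; rewrite h2 in h1.
rewrite mulrC -h1; apply/andP; split.
- rewrite -(EE_cst P 0); apply: EE_le; [exact: bdd_cst | bddt |] => w.
  rewrite mul1r; apply: mulr_ge0; first by rewrite indicE ler0n.
  by have /andP[] := Hy01 1 w i.
- rewrite -[X in _ <= X]h2; apply: EE_le; [bddt|bddt|] => w.
  rewrite !mul1r; rewrite -[X in _ <= X]mulr1; apply: ler_wpM2l.
    by rewrite indicE ler0n.
  by have /andP[] := Hy01 1 w i.
Qed.

Lemma mu1_range : 0 <= mu1 <= 1.
Proof.
rewrite /mu1; apply/andP; split.
  by apply: sumr_ge0 => c _; have /andP[] := Dmu c (pimu c).
by rewrite -HD1; apply: ler_sum => c _; have /andP[] := Dmu c (pimu c).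
Qed.

Lemma mu2_range t w : (t0 < t)%N -> 0 <= mu2 t w <= 1.
Proof.
move=> ht; rewrite /mu2; apply/andP; split.
  apply: sumr_ge0 => c _; apply: sumr_ge0 => i _; apply: mulr_ge0; last exact: p_ge0.
  by have /andP[] := Dmu c i.
rewrite -HD1; apply: ler_sum => c _.
apply: le_trans (_ : _ <= \sum_i D c * p t c i w) _.
  apply: ler_sum => i _; apply: ler_wpM2r; first exact: p_ge0.
  by have /andP[] := Dmu c i.
by rewrite -mulr_sumr p_sum // mulr1.
Qed.

Definition Z t w := (y t w (pimu (x t w)) - y t w (a t w)) - (mu1 - mu2 t w).

Lemma Z_bound t w : (t0 < t)%N -> `|Z t w| <= 2.
Proof.
move=> ht; rewrite /Z.
have /andP[a1 a2] := Hy01 t w (pimu (x t w)).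
have /andP[b1 b2] := Hy01 t w (a t w).
have /andP[c1 c2] := mu1_range.
have /andP[d1 d2] := mu2_range w ht.
rewrite ler_norml; apply/andP; split; lra.
Qed.

Lemma Fm_Y1 k t : (1 <= t <= k)%N -> Fm k (fun w => y t w (pimu (x t w))).
Proof.
move=> ht; rewrite /Fm.
rewrite (_ : (fun w => _) = (fun w => \sum_c \1_[set w | x t w = c] w * y t w (pimu c))); last first.
  by apply: funext => w; rewrite Y1E.
apply: (@measurable_sum _ (GT k) _ _ _ _ (fun c w => \1_[set w | x t w = c] w * y t w (pimu c))) => c.
apply: measurable_funM; first exact: Fm_indic (Hk_x _ ht).
exact: Fm_y.
Qed.

Lemma Fm_Y2 k t : (1 <= t <= k)%N -> Fm k (fun w => y t w (a t w)).
Proof.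
move=> ht; rewrite /Fm.
rewrite (_ : (fun w => _) = (fun w => \sum_c \sum_i
   \1_[set w | x t w = c] w * \1_[set w | a t w = i] w * y t w i)); last first.
  by apply: funext => w; rewrite Y2E.
apply: (@measurable_sum _ (GT k) _ _ _ _ (fun c w => \sum_i
   \1_[set w | x t w = c] w * \1_[set w | a t w = i] w * y t w i)) => c.
apply: (@measurable_sum _ (GT k) _ _ _ _ (fun i w =>
   \1_[set w | x t w = c] w * \1_[set w | a t w = i] w * y t w i)) => i.
apply: measurable_funM; last exact: Fm_y.
by apply: measurable_funM; [exact: Fm_indic (Hk_x _ ht)|exact: Fm_indic (Hk_a _ ht)].
Qed.

Lemma Fm_Z t : (t0 < t)%N -> Fm t (Z t).
Proof.
move=> ht; have ht1 : (1 <= t <= t)%N by rewrite leqnn andbT ltnW // t_gt1.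
rewrite /Fm /Z; apply: measurable_funB; first exact: measurable_funB (Fm_Y1 ht1) (Fm_Y2 ht1).
apply: measurable_funB; first exact: measurable_cst.
by apply: (Fm_mono (leq_pred t)); exact: Fm_mu2.
Qed.

Lemma bdd_Z t : (t0 < t)%N -> bdd (Z t).
Proof. by move=> ht; apply: (@Fm_bdd t _ 2 (Fm_Z ht)) => w; exact: Z_bound. Qed.

Lemma bdd_Y1 t : (t0 < t)%N -> bdd (fun w => y t w (pimu (x t w))).
Proof.
move=> ht; have ht1 : (1 <= t <= t)%N by rewrite leqnn andbT ltnW // t_gt1.
apply: (@Fm_bdd t _ 1 (Fm_Y1 ht1)) => w.
by have /andP[h1 h2] := Hy01 t w (pimu (x t w)); rewrite ger0_norm.
Qed.

Lemma bdd_Y2 t : (t0 < t)%N -> bdd (fun w => y t w (a t w)).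
Proof.
move=> ht; have ht1 : (1 <= t <= t)%N by rewrite leqnn andbT ltnW // t_gt1.
apply: (@Fm_bdd t _ 1 (Fm_Y2 ht1)) => w.
by have /andP[h1 h2] := Hy01 t w (a t w); rewrite ger0_norm.
Qed.

Ltac bddt2 := repeat match goal with
 | |- forall _, _ => move=> ?
 | |- bdd (fun _ => _ * _) => apply: bddM
 | |- bdd (fun _ => _ + _) => apply: bddD
 | |- bdd (fun _ => _ - _) => apply: bddB
 | |- bdd (fun _ => - _) => apply: bddN
 | |- bdd (fun _ => expR _) => apply: bdd_expR
 | |- bdd (fun _ => _ ^+ 2) => apply: bddX2
 | |- bdd (fun _ => \sum_(_ <- _ | _) _) => apply: bdd_sum
 | _ => first [exact: bdd_y | exact: bdd_Xc | exact: bdd_Ai | exact: bdd_cst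
               | (apply: bdd_p; assumption) | (apply: bdd_Y1; assumption)
               | (apply: bdd_Y2; assumption) | (apply: bdd_mu2; assumption)
               | (apply: bdd_Z; assumption)
               | (apply: bdd_indic; assumption) | assumption]
 end.

Lemma EGZ t G : (t0 < t)%N -> Fm t.-1 G -> bdd G -> EE (fun w => G w * Z t w) = 0.
Proof.
move=> ht hG bG; have t1 : (1 <= t)%N by apply: ltnW; exact: t_gt1.
rewrite (EE_ext P (g := fun w => (G w * y t w (pimu (x t w)) - G w * y t w (a t w))
   - (mu1 * G w - G w * mu2 t w))); last by move=> w; rewrite /Z; ring.
rewrite EE_B; [|bddt2|bddt2]. rewrite EE_B; [|bddt2|bddt2]. rewrite EE_B; [|bddt2|bddt2].
rewrite EE_Z //.
rewrite D1 // D2 //; ring.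
Qed.

Lemma Fm_G_mu t G : (t0 < t)%N -> Fm t.-1 G -> Fm t.-1 (fun w => G w * (mu1 - mu2 t w)).
Proof.
move=> ht hG; rewrite /Fm; apply: measurable_funM => //.
apply: measurable_funB; [exact: measurable_cst|exact: Fm_mu2].
Qed.

Lemma EGZ2 t G : (t0 < t)%N -> Fm t.-1 G -> bdd G -> (forall w, 0 <= G w) ->
  EE (fun w => G w * Z t w ^+ 2) <= EE G.
Proof.
move=> ht hG bG G0; have t1 : (1 <= t)%N by apply: ltnW; exact: t_gt1.
pose Gm w := G w * (mu1 - mu2 t w).
have hGm : Fm t.-1 Gm by exact: Fm_G_mu.
have bGm : bdd Gm by rewrite /Gm; bddt2.
rewrite (EE_ext P (g := fun w =>
   ((G w * (y t w (pimu (x t w)) - y t w (a t w)) ^+ 2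
    - 2 * (Gm w * y t w (pimu (x t w))))
    + 2 * (Gm w * y t w (a t w)))
    + (mu1 * Gm w - Gm w * mu2 t w))); last by move=> w; rewrite /Z /Gm; ring.
rewrite EE_D; [|bddt2|bddt2]. rewrite EE_D; [|bddt2|bddt2]. rewrite EE_B; [|bddt2|bddt2].
rewrite EE_B; [|bddt2|bddt2].
rewrite !EE_Z //; try bddt2.
rewrite D1 // D2 //.
have e : EE (fun w => Gm w * mu2 t w) = mu1 * EE Gm - EE (fun w => Gm w * (mu1 - mu2 t w)).
  rewrite (EE_ext P (f := fun w => Gm w * (mu1 - mu2 t w))
    (g := fun w => mu1 * Gm w - Gm w * mu2 t w)); last by move=> w; ring.
  rewrite EE_B; [|bddt2|bddt2]; rewrite EE_Z //; ring.
rewrite e.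
have h1 : EE (fun w => G w * (y t w (pimu (x t w)) - y t w (a t w)) ^+ 2) <= EE G.
  apply: EE_le; [bddt2|bddt2|] => w; rewrite -[X in _ <= X]mulr1; apply: ler_wpM2l => //.
  have /andP[a1 a2] := Hy01 t w (pimu (x t w)).
  have /andP[b1 b2] := Hy01 t w (a t w).
  nra.
have h2 : 0 <= EE (fun w => Gm w * (mu1 - mu2 t w)).
  rewrite -(EE_cst P 0); apply: EE_le; [bddt2|bddt2|] => w.
  by rewrite /Gm -mulrA; apply: mulr_ge0 => //; rewrite -expr2 sqr_ge0.
lra.
Qed.

Lemma step t G lam : (t0 < t)%N -> Fm t.-1 G -> bdd G -> (forall w, 0 <= G w) ->
  0 <= lam <= 1 / 2 ->
  EE (fun w => G w * expR (lam * Z t w)) <= (1 + 2 * lam ^+ 2) * EE G.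
Proof.
move=> ht hG bG G0 /andP[l0 l1].
apply: le_trans (_ : _ <= EE (fun w => G w + lam * (G w * Z t w) + 2 * lam ^+ 2 * (G w * Z t w ^+ 2))) _.
  apply: EE_le; [bddt2|bddt2|] => w.
  have hz := Z_bound w ht.
  have : -1 <= lam * Z t w <= 1.
    rewrite -ler_norml normrM ger0_norm //.
    by apply: le_trans (ler_pM l0 (normr_ge0 _) l1 hz) _; lra.
  move/expR_quad => he.
  apply: le_trans (ler_wpM2l (G0 w) he) _.
  by rewrite le_eqVlt; apply/orP; left; apply/eqP; ring.
rewrite EE_D; [|bddt2|bddt2]. rewrite EE_D; [|bddt2|bddt2].
rewrite !EE_Z; try bddt2.
rewrite EGZ // mulr0 addr0.
have := EGZ2 ht hG bG G0 => h.
have l2 : 0 <= 2 * lam ^+ 2 by rewrite mulr_ge0 // sqr_ge0.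
have := ler_wpM2l l2 h; lra.
Qed.

Definition Ssum j w := \sum_(t0.+1 <= t < (t0 + j).+1) Z t w.

Lemma Ssum0 w : Ssum 0 w = 0.
Proof. by rewrite /Ssum addn0 big_geq. Qed.

Lemma SsumS j w : Ssum j.+1 w = Ssum j w + Z (t0 + j).+1 w.
Proof. by rewrite /Ssum addnS big_nat_recr //= ltnS leq_addr. Qed.

Lemma Fm_Ssum j : Fm (t0 + j) (Ssum j).
Proof.
elim: j => [|j IH].
  rewrite /Fm (_ : Ssum 0 = fun=> 0); first exact: measurable_cst.
  by apply: funext => w; rewrite Ssum0.
rewrite /Fm (_ : Ssum j.+1 = fun w => Ssum j w + Z (t0 + j).+1 w); last first.
  by apply: funext => w; rewrite SsumS.
apply: measurable_funD.
  by apply: (Fm_mono _ IH); rewrite leq_add2l.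
by rewrite addnS; apply: Fm_Z; rewrite ltnS leq_addr.
Qed.

Lemma Ssum_bound j w : `|Ssum j w| <= 2 * j%:R.
Proof.
elim: j => [|j IH]; first by rewrite Ssum0 normr0 mulr0.
rewrite SsumS; apply: le_trans (ler_normD _ _) _.
rewrite (_ : 2 * j.+1%:R = 2 * j%:R + 2 :> R); last by rewrite -addn1 natrD; ring.
apply: lerD => //.
by apply: Z_bound; rewrite ltnS leq_addr.
Qed.

Lemma bdd_Ssum j : bdd (Ssum j).
Proof. by split; [exact: (Fm_meas (@Fm_Ssum j)) | exists (2 * j%:R); exact: Ssum_bound]. Qed.

Lemma mgf j lam : 0 <= lam <= 1 / 2 ->
  EE (fun w => expR (lam * Ssum j w)) <= (1 + 2 * lam ^+ 2) ^+ j.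
Proof.
move=> hl; elim: j => [|j IH].
  rewrite expr0 (EE_ext P (g := fun=> 1)) ?(EE_cst P) // => w.
  by rewrite Ssum0 mulr0 expR0.
have ht : (t0 < (t0 + j).+1)%N by rewrite ltnS leq_addr.
have hG : Fm (t0 + j).+1.-1 (fun w => expR (lam * Ssum j w)).
  rewrite /Fm /=; apply: (measurableT_comp (@measurable_expR R)).
  by apply: measurable_funM; [exact: measurable_cst | exact: Fm_Ssum].
have bG : bdd (fun w => expR (lam * Ssum j w)).
  by apply: bdd_expR; apply: bddM; [exact: bdd_cst|exact: bdd_Ssum].
rewrite (EE_ext P (g := fun w => expR (lam * Ssum j w) * expR (lam * Z (t0 + j).+1 w))); last first.
  by move=> w; rewrite SsumS mulrDr expRD.
apply: le_trans (step ht hG bG (fun w => expR_ge0 _) hl) _.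
rewrite [X in _ <= X]exprS; apply: ler_wpM2l => //.
by apply: addr_ge0 => //; apply: mulr_ge0 => //; exact: sqr_ge0.
Qed.

Local Notation Nn := (T - t0)%N.

Lemma chernoff eps lam : 0 <= lam <= 1 / 2 ->
  EE (\1_[set w | eps <= Ssum Nn w]) <= expR (- (lam * eps)) * (1 + 2 * lam ^+ 2) ^+ Nn.
Proof.
move=> hl; have /andP[l0 l1] := hl.
have mA : measurable [set w | eps <= Ssum Nn w].
  by apply: meas_le; [exact: measurable_cst | exact: Fm_meas (@Fm_Ssum Nn)].
apply: le_trans (_ : _ <= EE (fun w => expR (- (lam * eps)) * expR (lam * Ssum Nn w))) _.
  apply: EE_le; [exact: bdd_indic| |].
    by apply: bddM; [exact: bdd_cst|apply: bdd_expR; apply: bddM; [exact: bdd_cst|exact: bdd_Ssum]].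
  move=> w; rewrite indicE -expRD; case: (boolP (w \in _)) => hw.
    rewrite -[X in X <= _]addr0; apply: le_trans (expR_ge1Dx _).
    rewrite (_ : true%:R = 1 :> R) // lerD2l addrC -mulrBr; apply: mulr_ge0 => //.
    by rewrite subr_ge0; move: hw; rewrite inE.
  exact: expR_ge0.
rewrite EE_Z; last by apply: bdd_expR; apply: bddM; [exact: bdd_cst|exact: bdd_Ssum].
by apply: ler_wpM2l; [exact: expR_ge0 | exact: mgf].
Qed.

Definition eps := Num.sqrt (8 * Nn%:R * ln (2 / delta)).

Lemma PA_bound : EE (\1_[set w | eps <= Ssum Nn w]) <= delta / 2.
Proof.
have Nn1 : (0 < Nn)%N by rewrite subn_gt0.
have NnR : 0 < Nn%:R :> R by rewrite ltr0n.
have /andP[d0 d1] := Hdelta.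
have L0 : 0 < ln (2 / delta).
  apply: ln_gt0; rewrite ltr_pdivlMr //; lra.
set L := ln (2 / delta) in L0 *.
have eps0 : 0 <= eps by exact: sqrtr_ge0.
have e2 : eps ^+ 2 = 8 * Nn%:R * L.
  by rewrite /eps sqr_sqrtr // mulr_ge0 // ?mulr_ge0 // ltW.
case: (leP eps (2 * Nn%:R)) => he.
- pose lam := eps / (4 * Nn%:R).
  have N4 : 0 < 4 * Nn%:R :> R by rewrite mulr_gt0.
  have hl : 0 <= lam <= 1 / 2.
    apply/andP; split; first by rewrite /lam divr_ge0 // ltW.
    by rewrite /lam ler_pdivrMr // mul1r; lra.
  apply: le_trans (chernoff eps hl) _.
  apply: le_trans (_ : _ <= expR (- (lam * eps)) * expR (2 * lam ^+ 2 * Nn%:R)) _.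
    apply: ler_wpM2l; first exact: expR_ge0.
    rewrite expRM_natr; apply: lerXn2r; rewrite ?nnegrE ?expR_ge0 //.
      by apply: addr_ge0 => //; apply: mulr_ge0 => //; exact: sqr_ge0.
    exact: expR_ge1Dx.
  rewrite -expRD.
  have -> : - (lam * eps) + 2 * lam ^+ 2 * Nn%:R = - (eps ^+ 2 / (8 * Nn%:R)).
    by rewrite /lam; field; rewrite lt0r_neq0.
  rewrite e2 (_ : 8 * Nn%:R * L / (8 * Nn%:R) = L); last first.
    by field; rewrite lt0r_neq0.
  rewrite expRN /L lnK; last by rewrite posrE divr_gt0.
  by rewrite invf_div.
- rewrite (EE_ext P (g := fun=> 0)) ?(EE_cst P); first by rewrite divr_ge0 // ltW.
  move=> w; rewrite indicE memNset //= => h.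
  have := Ssum_bound Nn w; rewrite ler_norml => /andP[_ h2].
  lra.
Qed.

Definition Greg := [set w | forall m, (m0 <= m)%N -> (tau (m - 1) < T)%N ->
        forall pi : X -> 'I_n.+1,
        (Reg D mu pimu pi <=
         2 * Reghat D (muhat m w) pi + 204 * n.+1%:R / gamma m w)%R].

Lemma mu_gap t w : (t0 < t)%N -> (t <= T)%N -> Greg w ->
  mu1 - mu2 t w <= 206 * K / gamma (epoch t) w.
Proof.
move=> ht htT hw; rewrite /mu1 /mu2 /p.
apply: regret_alg => //.
  by apply: Hgam0; exact: epoch_ge.
apply: hw; first exact: epoch_ge.
apply: leq_ltn_trans (epoch_tau ht) _.
by apply: leq_trans htT; rewrite prednK // ltnW // t_gt1.
Qed.

Lemma meas_muhat m c j : (m0 <= m)%N -> measurable_fun setT (fun w => muhat m w c j).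
Proof. by move=> hm; exact: (Fm_meas (@Fm_muhat m _ c j hm (leqnn _))). Qed.

Lemma meas_gamma m : (m0 <= m)%N -> measurable_fun setT (gamma m).
Proof. by move=> hm; exact: (Fm_meas (@Fm_gamma m _ hm (leqnn _))). Qed.

Lemma meas_Greg : measurable Greg.
Proof.
pose cond m := (m0 <= m)%N && (tau (m - 1) < T)%N.
pose inner m (f : {ffun X -> A}) := [set w | Reg D mu pimu f <=
         2 * Reghat D (muhat m w) f + 204 * n.+1%:R / gamma m w].
rewrite (_ : Greg = \bigcap_m (if cond m then \bigcap_(f in [set: {ffun X -> A}]) inner m f
                                 else setT)).
  apply: bigcapT_measurable => m; rewrite /cond; case: (boolP (m0 <= m)%N) => //= hm.
  case: (tau (m - 1) < T)%N => //.
  apply: fin_bigcap_measurable; first exact: finite_finset.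
  move=> f _; apply: meas_le; first exact: measurable_cst.
  apply: measurable_funD.
    apply: measurable_funM; first exact: measurable_cst.
    rewrite /Reghat /Rval; apply: measurable_funB.
      apply: (@measurable_sum _ _ _ _ _ _ (fun c w => D c * muhat m w c (bgreedy (muhat m w) c))) => c.
      apply: measurable_funM; first exact: measurable_cst.
      by apply: greedy_val_meas => j; exact: meas_muhat.
    apply: (@measurable_sum _ _ _ _ _ _ (fun c w => D c * muhat m w c (f c))) => c.
    by apply: measurable_funM; [exact: measurable_cst | exact: meas_muhat].
  apply: measurable_funM; first exact: measurable_cst.
  by apply: (measurableT_comp (@measurable_inv R)); exact: meas_gamma.
apply/seteqP; split => w /=.
- move=> hw m _; rewrite /cond; case: (boolP (m0 <= m)%N) => //= hm.
  case: (boolP (tau (m - 1) < T)%N) => //= hT f _.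
  exact: hw.
- move=> hw m hm hT pi.
  have := hw m I; rewrite /cond hm hT /= => h.
  have -> : pi = (fun c => [ffun c => pi c] c) by apply: funext => c; rewrite ffunE.
  exact: h.
Qed.

Lemma meas_Y1 t : measurable_fun setT (fun w => y t w (pimu (x t w))).
Proof.
rewrite (_ : (fun w => _) = (fun w => \sum_c \1_[set w | x t w = c] w * y t w (pimu c))); last first.
  by apply: funext => w; rewrite Y1E.
apply: (@measurable_sum _ _ _ _ _ _ (fun c w => \1_[set w | x t w = c] w * y t w (pimu c))) => c.
by apply: measurable_funM; [exact: measurable_indic|exact: Hym].
Qed.

Lemma meas_Y2 t : measurable_fun setT (fun w => y t w (a t w)).
Proof.
rewrite (_ : (fun w => _) = (fun w => \sum_c \sum_i
   \1_[set w | x t w = c] w * \1_[set w | a t w = i] w * y t w i)); last first.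
  by apply: funext => w; rewrite Y2E.
apply: (@measurable_sum _ _ _ _ _ _ (fun c w => \sum_i
   \1_[set w | x t w = c] w * \1_[set w | a t w = i] w * y t w i)) => c.
apply: (@measurable_sum _ _ _ _ _ _ (fun i w =>
   \1_[set w | x t w = c] w * \1_[set w | a t w = i] w * y t w i)) => i.
apply: measurable_funM; last exact: Hym.
by apply: measurable_funM; exact: measurable_indic.
Qed.

Definition Cset := [set w |
      (\sum_(1 <= t < T.+1) (y t w (pimu (x t w)) - y t w (a t w)) <=
      (tau (m0 - 1))%:R
      + 206 * n.+1%:R * \sum_((tau (m0 - 1)).+1 <= t < T.+1) (gamma (epoch t) w)^-1
      + Num.sqrt (8 * (T - tau (m0 - 1))%:R * ln (2 / delta)))%R].

Lemma meas_Cset : measurable Cset.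
Proof.
apply: meas_le.
  apply: (@measurable_sum _ _ _ _ _ _ (fun t w => y t w (pimu (x t w)) - y t w (a t w))) => t.
  by apply: measurable_funB; [exact: meas_Y1|exact: meas_Y2].
apply: measurable_funD; last exact: measurable_cst.
apply: measurable_funD; first exact: measurable_cst.
apply: measurable_funM; first exact: measurable_cst.
rewrite (_ : (fun w => _) = (fun w => \sum_(t0.+1 <= t < T.+1)
    (gamma (epoch (maxn t t0.+1)) w)^-1)); last first.
  apply: funext => w; apply: eq_big_nat => t /andP[h1 h2].
  by rewrite (maxn_idPl h1).
apply: (@measurable_sum _ _ _ _ _ _ (fun t w => (gamma (epoch (maxn t t0.+1)) w)^-1)) => t.
apply: (measurableT_comp (@measurable_inv R)); apply: meas_gamma.
by apply: epoch_ge; rewrite leq_maxr.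
Qed.

Lemma key w : Greg w -> Ssum Nn w < eps -> Cset w.
Proof.
move=> hG hS; rewrite /Cset /=.
have h1T : (1 <= t0.+1 <= T.+1)%N by rewrite ltnS /=; apply: ltnW.
rewrite (big_cat_nat _ (n := t0.+1)) //=.
have p1 : \sum_(1 <= t < t0.+1) (y t w (pimu (x t w)) - y t w (a t w)) <= t0%:R.
  apply: le_trans (_ : _ <= \sum_(1 <= t < t0.+1) (1 : R)) _.
    apply: ler_sum_nat => t _.
    have /andP[a1 a2] := Hy01 t w (pimu (x t w)).
    have /andP[b1 b2] := Hy01 t w (a t w).
    lra.
  by rewrite sumr_const_nat subn1 /=.
have eT : (t0 + Nn).+1 = T.+1 by rewrite subnKC // ltnW.
have p2 : \sum_(t0.+1 <= t < T.+1) (y t w (pimu (x t w)) - y t w (a t w)) =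
    Ssum Nn w + \sum_(t0.+1 <= t < T.+1) (mu1 - mu2 t w).
  rewrite /Ssum eT -big_split /=; apply: eq_bigr => t _; rewrite /Z; ring.
have p3 : \sum_(t0.+1 <= t < T.+1) (mu1 - mu2 t w) <=
    206 * K * \sum_(t0.+1 <= t < T.+1) (gamma (epoch t) w)^-1.
  rewrite mulr_sumr; apply: ler_sum_nat => t /andP[h1 h2].
  by apply: mu_gap => //; rewrite -ltnS.
rewrite p2; rewrite -/eps; lra.
Qed.

Lemma main_aux : ((1 - delta / 2)%:E <= P Greg)%E -> ((1 - delta)%:E <= P Cset)%E.
Proof.
move=> Hreg.
have mG := meas_Greg; have mC := meas_Cset.
have mA : measurable [set w | eps <= Ssum Nn w].
  by apply: meas_le; [exact: measurable_cst | exact: Fm_meas (@Fm_Ssum Nn)].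
have hG : 1 - delta / 2 <= EE (\1_Greg).
  by rewrite EE_indic // -lee_fin fineK //; exact: finP.
have hA := PA_bound.
have hC : EE (\1_Greg) - EE (\1_[set w | eps <= Ssum Nn w]) <= EE (\1_Cset).
  rewrite -EE_B; [|exact: bdd_indic|exact: bdd_indic].
  apply: EE_le; [by apply: bddB; exact: bdd_indic | exact: bdd_indic |] => w.
  rewrite !indicE; case: (boolP (w \in Greg)) => wG; case: (boolP (w \in Cset)) => wC;
    case: (boolP (w \in [set w | eps <= Ssum Nn w])) => wA //=; try lra.
  exfalso; move/negP: wC; apply; apply/mem_set; apply: key; first exact: set_mem.
  by rewrite ltNge; apply/negP => h; move/negP: wA; apply; apply/mem_set.
rewrite -(fineK (finP P mC)) lee_fin -EE_indic //; lra.
Qed.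

End Main.



Unset Implicit Arguments.

Theorem mainTheorem7
  (R : realType) (X : finType) (n : nat)
  (D : X -> R) (mu : X -> 'I_n.+1 -> R) (pimu : X -> 'I_n.+1)
  (d : measure_display) (Omega : measurableType d) (P : probability Omega R)
  (x : nat -> Omega -> X) (y : nat -> Omega -> 'I_n.+1 -> R)
  (a : nat -> Omega -> 'I_n.+1)
  (muhat : nat -> Omega -> X -> 'I_n.+1 -> R) (gamma : nat -> Omega -> R)
  (m0 T : nat) (delta : R)
  (* context distribution *)
  (HD0 : forall c, 0 <= D c) (HD1 : \sum_(c : X) D c = 1)
  (* pi_mu is a greedy policy for mu *)
  (Hpimu : forall c i, mu c i <= mu c (pimu c))
  (* parameters *)
  (Hm0 : (1 <= m0)%N) (HT : (tau (m0 - 1) < T)%N)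
  (Hdelta : 0 < delta < 1)
  (* the observed quantities are random variables *)
  (Hxm : forall t c, measurable [set w | x t w = c])
  (Ham : forall t i, measurable [set w | a t w = i])
  (Hym : forall t i, measurable_fun setT (fun w => y t w i))
  (* rewards in [0,1]^K *)
  (Hy01 : forall t w i, 0 <= y t w i <= 1)
  (* x_t ~ D, independent of the past S_{t-1} *)
  (Hxind : forall t, (1 <= t)%N -> forall S c, hist x y a t.-1 S ->
     (P (S `&` [set w | x t w = c]) = (D c)%:E * P S)%E)
  (* E[y_t(i) | x_t, S_{t-1}] = mu(x_t, i) *)
  (Hycond : forall t, (1 <= t)%N -> forall S c i, hist x y a t.-1 S ->
     (\int[P]_(w in S `&` [set w | x t w = c]) (y t w i)%:E =
      (mu c i)%:E * P (S `&` [set w | x t w = c]))%E)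
  (* (muhat_m, gamma_m) is S_{tau_{m-1}}-measurable, gamma_m > 0 *)
  (Hmuhm : forall m, (m0 <= m)%N -> forall c i (B : set R), measurable B ->
     hist x y a (tau (m - 1)) [set w | B (muhat m w c i)])
  (Hgamm : forall m, (m0 <= m)%N -> forall (B : set R), measurable B ->
     hist x y a (tau (m - 1)) [set w | B (gamma m w)])
  (Hgam0 : forall m w, (m0 <= m)%N -> 0 < gamma m w)
  (* for t > tau_{m0-1}: a_t ~ p_{m(t)}(. | x_t), independently of y_t
     given (x_t, S_{t-1}) *)
  (Hact : forall t, (tau (m0 - 1) < t)%N ->
     forall S c (B : 'I_n.+1 -> set R) i,
     hist x y a t.-1 S -> (forall j, measurable (B j)) ->
     let E := S `&` [set w | x t w = c] `&` [set w | forall j, B j (y t w j)] in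
     P (E `&` [set w | a t w = i]) =
     (\int[P]_(w in E) (pker (muhat (epoch t) w) (gamma (epoch t) w) c i)%:E)%E)
  (* the high-probability regret-estimation event *)
  (Hreg : ((1 - delta / 2)%:E <=
     P [set w | forall m, (m0 <= m)%N -> (tau (m - 1) < T)%N ->
        forall pi : X -> 'I_n.+1,
        (Reg D mu pimu pi <=
         2 * Reghat D (muhat m w) pi + 204 * n.+1%:R / gamma m w)%R])%E) :
  ((1 - delta)%:E <=
   P [set w |
      (\sum_(1 <= t < T.+1) (y t w (pimu (x t w)) - y t w (a t w)) <=
      (tau (m0 - 1))%:R
      + 206 * n.+1%:R * \sum_((tau (m0 - 1)).+1 <= t < T.+1) (gamma (epoch t) w)^-1
      + Num.sqrt (8 * (T - tau (m0 - 1))%:R * ln (2 / delta)))%R])%E.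
Proof.
exact: (main_aux HD0 HD1 Hm0 HT Hdelta Hxm Ham Hym Hy01 Hxind Hycond Hmuhm Hgamm Hgam0 Hact Hreg).
Qed.
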